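(* Let $P,Q,R_0,R_1$ be integers with $P>0$, $Q<0$, $R_0,R_1$ positive, and $\gcd(P,Q)=\gcd(R_1,Q)=1$. Let $R_{n+2}=PR_{n+1}-QR_n$ ($n\ge0$) and let $\alpha,\beta$ be the roots of $x^2-Px+Q$ with $|\alpha|\ge|\beta|$. Then \[R_m\ge(R_1+R_0|\beta|)\,\alpha^{m-2}\quad\text{for all } m\ge2.\] *)

(* Defs.v *)
From Stdlib Require Export Reals ZArith Lra Lia.

(* Main.v *)
Require Import Defs.
Open Scope R_scope.

Theorem lemma11 (P Q : Z) (Rs : nat -> Z) (alpha beta : R)
  (hP : (0 < P)%Z) (hQ : (Q < 0)%Z)
  (hR0 : (0 < Rs 0%nat)%Z) (hR1 : (0 < Rs 1%nat)%Z)
  (hgPQ : Z.gcd P Q = 1%Z) (hgR1Q : Z.gcd (Rs 1%nat) Q = 1%Z)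
  (hrec : forall n : nat, Rs (S (S n)) = (P * Rs (S n) - Q * Rs n)%Z)
  (hroots : forall x : R, x ^ 2 - IZR P * x + IZR Q = (x - alpha) * (x - beta))
  (habs : Rabs alpha >= Rabs beta) :
  forall m : nat, (2 <= m)%nat ->
    IZR (Rs m) >= (IZR (Rs 1%nat) + IZR (Rs 0%nat) * Rabs beta) * alpha ^ (m - 2).
Proof.
  assert (hq : IZR Q = alpha * beta).
  { pose proof (hroots 0) as h. simpl in h. lra. }
  assert (hp : IZR P = alpha + beta).
  { pose proof (hroots 1) as h. simpl in h. nra. }
  assert (hP1 : 1 <= IZR P) by (apply IZR_le; lia).
  assert (hQ0 : IZR Q < 0) by (apply IZR_lt; lia).
  assert (hab : alpha * beta < 0) by lra.
  assert (hsign : 0 < alpha /\ beta < 0).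
  { destruct (Rlt_or_le 0 alpha) as [ha|ha].
    - split; [exact ha|]. nra.
    - assert (hb : 0 < beta) by nra.
      assert (ha' : alpha < 0) by nra.
      rewrite (Rabs_left alpha ha') in habs.
      rewrite (Rabs_right beta) in habs by lra. lra. }
  destruct hsign as [ha hb].
  assert (pos : forall n, (0 < Rs n)%Z /\ (0 < Rs (S n))%Z).
  { induction n as [|n [IH1 IH2]]; [split; assumption|].
    split; [assumption|]. rewrite hrec. nia. }
  set (S0 := IZR (Rs 1%nat) - beta * IZR (Rs 0%nat)).
  assert (hS : forall n, IZR (Rs (S n)) - beta * IZR (Rs n) = alpha ^ n * S0).
  { induction n as [|n IH].
    - simpl. unfold S0. ring.
    - rewrite hrec, minus_IZR, !mult_IZR, hp, hq.
      replace (alpha ^ S n * S0) with (alpha * (alpha ^ n * S0)) by (simpl; ring).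
      rewrite <- IH. ring. }
  intros m hm.
  destruct m as [|[|k]]; [lia|lia|].
  replace (S (S k) - 2)%nat with k by lia.
  rewrite (Rabs_left beta hb).
  replace (IZR (Rs 1%nat) + IZR (Rs 0%nat) * - beta) with S0 by (unfold S0; ring).
  pose proof (hS (S k)) as e1. pose proof (hS k) as e2.
  destruct (pos k) as [p1 p2].
  apply IZR_lt in p1. apply IZR_lt in p2.
  assert (hS0 : 0 < S0).
  { unfold S0. pose proof (IZR_lt _ _ hR1). pose proof (IZR_lt _ _ hR0). nra. }
  assert (hak : 0 < alpha ^ k) by (apply pow_lt; lra).
  assert (hX : 0 < alpha ^ k * S0) by nra.
  simpl pow in e1.
  assert (hle : IZR (Rs (S k)) <= alpha ^ k * S0) by nra.
  assert (IZR (Rs (S (S k))) = alpha * (alpha ^ k * S0) + beta * IZR (Rs (S k))) by lra.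
  assert (beta * IZR (Rs (S k)) >= beta * (alpha ^ k * S0)) by nra.
  assert ((alpha + beta) * (alpha ^ k * S0) >= alpha ^ k * S0) by nra.
  lra.
Qed.
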